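(* Let $0<\alpha\le 2\pi/3$ and let $u,v\in V$ with $\{u,v\}\in E$. Then either $(u,v)\in N_\alpha$, or there is a sequence $u_0,\dots,u_m$ with $u_0=u$, $u_m=v$, and for all $i=0,\dots,m-1$: $(u_i,u_{i+1})\in N_\alpha$ and $d(u_i,u_{i+1})<d(u,v)$.
   Context: Let $V$ be a finite set of pairwise distinct points (nodes) in the Euclidean plane, $d$ the Euclidean distance, and $R>0$. Let $G_R=(V,E)$ be the undirected graph with $E=\{\{u,v\}: u\neq v,\ d(u,v)\le R\}$. Fix a finite increasing sequence of radius levels $0<r_1<r_2<\dots<r_k=R$. For $u\in V$ and $1\le i\le k$ let $S_i(u)=\{v\in V\setminus\{u\}: d(u,v)\le r_i\}$. For $0<\alpha<2\pi$, a closed cone of width $\alpha$ with apex $u$ is a set $\{u+t(\cos\varphi,\sin\varphi): t\ge 0,\ \varphi\in[\theta-\alpha/2,\theta+\alpha/2]\}$ for some $\theta$. A finite set $S\subseteq V\setminus\{u\}$ has an $\alpha$-gap (at $u$) if some closed cone of width $\alpha$ with apex $u$ contains no node of $S$ (in particular $\emptyset$ has an $\alpha$-gap). The algorithm CBTC($\alpha$) assigns to each $u$ the index $i_u$ = the least $i\in\{1,\dots,k\}$ such that $S_i(u)$ has no $\alpha$-gap, or $i_u=k$ if there is no such $i$; set $N_\alpha(u)=S_{i_u}(u)$ and $N_\alpha=\{(u,v): v\in N_\alpha(u)\}$ (a directed relation, not necessarily symmetric). *)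

(* Defs.v *)
From Stdlib Require Import Reals List.
Open Scope R_scope.

Definition point : Type := (R * R)%type.

Definition edist (p q : point) : R :=
  sqrt ((fst p - fst q)^2 + (snd p - snd q)^2).

Definition radius_levels (k : nat) (r : nat -> R) (Rmax : R) : Prop :=
  (1 <= k)%nat /\ 0 < r 1%nat /\
  (forall i, (1 <= i)%nat -> (i < k)%nat -> r i < r (S i)) /\
  r k = Rmax.

Definition Sset (V : list point) (r : nat -> R) (i : nat) (u v : point) : Prop :=
  In v V /\ v <> u /\ edist u v <= r i.

Definition in_cone (u : point) (alpha theta : R) (p : point) : Prop :=
  exists t phi, 0 <= t /\ theta - alpha / 2 <= phi <= theta + alpha / 2 /\
    p = (fst u + t * cos phi, snd u + t * sin phi).

Definition has_gap (alpha : R) (u : point) (Sp : point -> Prop) : Prop :=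
  exists theta, forall p, Sp p -> ~ in_cone u alpha theta p.

Definition cbtc_index (alpha : R) (V : list point) (k : nat) (r : nat -> R)
    (u : point) (i : nat) : Prop :=
  ((1 <= i)%nat /\ (i <= k)%nat /\ ~ has_gap alpha u (Sset V r i u) /\
     (forall j, (1 <= j)%nat -> (j < i)%nat -> has_gap alpha u (Sset V r j u)))
  \/
  (i = k /\ forall j, (1 <= j)%nat -> (j <= k)%nat -> has_gap alpha u (Sset V r j u)).

Definition N_alpha (alpha : R) (V : list point) (k : nat) (r : nat -> R)
    (u v : point) : Prop :=
  exists i, cbtc_index alpha V k r u i /\ Sset V r i u v.

(* Main.v *)
Require Import Defs.
From Stdlib Require Import Reals List Lra Lia Psatz Classical Arith.
Open Scope R_scope.

Lemma pt_eq (p : point) : p = (fst p, snd p).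
Proof. destruct p; reflexivity. Qed.

Lemma polar (a b : R) : 0 < a^2 + b^2 ->
  exists th, a = sqrt (a^2+b^2) * cos th /\ b = sqrt (a^2+b^2) * sin th.
Proof.
  intros H. set (d := sqrt (a^2+b^2)).
  assert (Hd : 0 < d) by (apply sqrt_lt_R0; lra).
  assert (Hdd : d * d = a^2 + b^2) by (apply sqrt_sqrt; lra).
  assert (Hb : -1 <= a/d <= 1).
  { assert (Ha : Rabs a <= d).
    { rewrite <- (sqrt_square (Rabs a)) by apply Rabs_pos. unfold d.
      apply sqrt_le_1_alt. rewrite <- Rabs_mult, Rabs_right by nra. nra. }
    assert (-d <= a <= d) by (revert Ha; unfold Rabs; destruct (Rcase_abs a); intros; lra). split; [apply (Rmult_le_reg_r d)|apply (Rmult_le_reg_r d)]; try lra;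
    field_simplify; lra. }
  assert (Hs : sqrt (1 - (a/d)²) = Rabs b / d).
  { rewrite <- (sqrt_square (Rabs b / d)).
    - f_equal. unfold Rsqr.
      assert (Hbb : Rabs b * Rabs b = b*b) by (rewrite <- Rabs_mult; rewrite Rabs_right; nra).
      field_simplify_eq; [|lra]. rewrite ?Hbb. simpl in Hdd. nra.
    - apply Rmult_le_pos; [apply Rabs_pos| left; apply Rinv_0_lt_compat; lra]. }
  destruct (Rle_dec 0 b) as [Hb0|Hb0].
  - exists (acos (a/d)). rewrite cos_acos, sin_acos, Hs by lra.
    rewrite Rabs_right by lra. split; field; lra.
  - exists (- acos (a/d)). rewrite cos_neg, sin_neg, cos_acos, sin_acos, Hs by lra.
    rewrite Rabs_left by lra. split; field; lra.
Qed.

Lemma cos_ge_half x : Rabs x <= PI/3 -> 1/2 <= cos x.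
Proof.
  intros H. rewrite <- cos_PI3. pose proof PI_RGT_0.
  destruct (Rle_dec 0 x).
  - rewrite Rabs_right in H by lra. apply cos_decr_1; lra.
  - rewrite Rabs_left in H by lra. rewrite <- (cos_neg x). apply cos_decr_1; lra.
Qed.

Lemma edist_cone (u : point) t phi : 0 <= t ->
  edist u (fst u + t * cos phi, snd u + t * sin phi) = t.
Proof.
  intros Ht. unfold edist; cbn [fst snd].
  replace ((fst u - (fst u + t * cos phi)) ^ 2 + (snd u - (snd u + t * sin phi)) ^ 2)
    with (t*t * ((sin phi)² + (cos phi)²)) by (unfold Rsqr; ring).
  rewrite sin2_cos2, Rmult_1_r. apply sqrt_square; lra.
Qed.

Lemma geo alpha (u v : point) (S : point -> Prop) :
  0 < alpha -> alpha <= 2*PI/3 -> u <> v -> ~ has_gap alpha u S ->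
  (forall p, S p -> p <> u /\ edist u p < edist u v) ->
  exists w, S w /\ edist w v < edist u v.
Proof.
  intros Ha1 Ha2 Huv Hng HS.
  set (a := fst v - fst u). set (b := snd v - snd u).
  assert (Hpos : 0 < a^2 + b^2).
  { destruct (Req_dec a 0); destruct (Req_dec b 0); try nra.
    exfalso; apply Huv. rewrite (pt_eq u), (pt_eq v). unfold a, b in *. f_equal; lra. }
  destruct (polar a b Hpos) as [th [Ea Eb]].
  assert (Ed : edist u v = sqrt (a^2+b^2)).
  { unfold edist, a, b. f_equal. ring. }
  set (d := sqrt (a^2+b^2)) in *.
  assert (Hd : 0 < d) by (apply sqrt_lt_R0; lra).
  assert (Hex : exists p, S p /\ in_cone u alpha th p).
  { apply NNPP. intro Hn. apply Hng. exists th. intros p Sp Hc. apply Hn. eauto. }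
  destruct Hex as [p [Sp Hc]].
  destruct Hc as [t [phi [Ht [Hphi Ep]]]].
  exists p. split; [exact Sp|].
  destruct (HS p Sp) as [Hpu Hup].
  rewrite Ep, edist_cone in Hup by lra.
  assert (Ht0 : 0 < t).
  { destruct Ht as [|Ht]; [lra|]. exfalso. apply Hpu. rewrite Ep, <- Ht, (pt_eq u).
    simpl. f_equal; ring. }
  assert (Hc : 1/2 <= cos (phi - th)).
  { apply cos_ge_half. apply Rabs_le. lra. }
  rewrite cos_minus in Hc.
  rewrite Ed, Ep. unfold d at 1.
  unfold edist; cbn [fst snd]. apply sqrt_lt_1_alt. split; [apply Rplus_le_le_0_compat; apply pow2_ge_0|].
  replace (fst u + t * cos phi - fst v) with (t * cos phi - a) by (unfold a; ring).
  replace (snd u + t * sin phi - snd v) with (t * sin phi - b) by (unfold b; ring).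
  assert (Hdd : d * d = a^2 + b^2) by (apply sqrt_sqrt; lra).
  pose proof (sin2_cos2 phi). unfold Rsqr in *.
  rewrite Ea, Eb. clear Hdd.
  set (C := cos phi * cos th + sin phi * sin th) in *.
  assert (HC : t*d*(C - 1/2) >= 0) by (apply Rle_ge, Rmult_le_pos; nra).
  assert (Htd : t*(t-d) < 0) by nra.
  assert (E : (t * cos phi - d * cos th) ^ 2 + (t * sin phi - d * sin th) ^ 2
     = t*t*(sin phi * sin phi + cos phi * cos phi) - 2*t*d*C + ((d * cos th) ^ 2 + (d * sin th) ^ 2))
    by (unfold C; ring).
  rewrite E, H. lra.
Qed.

Lemma least_ex (P : nat -> Prop) n : P n -> exists m, P m /\ forall j, (j < m)%nat -> ~ P j.
Proof.
  revert P. induction n as [n IH] using lt_wf_ind. intros P Hn.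
  destruct (classic (exists j, (j < n)%nat /\ P j)) as [[j [Hj Pj]]|Hno].
  - exact (IH j Hj P Pj).
  - exists n. split; [exact Hn|]. intros j Hj Pj. apply Hno. eauto.
Qed.

Section Filt.
Variable A : Type.
Lemma filter_le (P Q : A -> bool) l : (forall x, P x = true -> Q x = true) ->
  (length (filter P l) <= length (filter Q l))%nat.
Proof.
  intros H. induction l as [|x l IH]; simpl; [lia|].
  destruct (P x) eqn:E1; destruct (Q x) eqn:E2; simpl; try lia.
  rewrite (H x E1) in E2; discriminate.
Qed.
Lemma filter_lt (P Q : A -> bool) l x : (forall x, P x = true -> Q x = true) ->
  In x l -> Q x = true -> P x = false ->
  (length (filter P l) < length (filter Q l))%nat.
Proof.
  intros H. induction l as [|y l IH]; simpl; [tauto|]. intros [<-|Hin] HQ HP.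
  - rewrite HQ, HP. simpl. pose proof (filter_le P Q l H). lia.
  - pose proof (IH Hin HQ HP).
    destruct (P y) eqn:E1; destruct (Q y) eqn:E2; simpl; try lia.
    rewrite (H y E1) in E2; discriminate.
Qed.
End Filt.

Definition ltb_d (d : R) (pq : point * point) : bool :=
  if Rlt_dec (edist (fst pq) (snd pq)) d then true else false.
Definition cnt (V : list point) (d : R) : nat := length (filter (ltb_d d) (list_prod V V)).

Lemma cnt_lt V (w v : point) d : In w V -> In v V -> edist w v < d ->
  (cnt V (edist w v) < cnt V d)%nat.
Proof.
  intros Hw Hv Hd. unfold cnt. apply (filter_lt _ _ _ _ (w, v)).
  - intros [p q]. unfold ltb_d; cbn [fst snd].
    destruct (Rlt_dec (edist p q) (edist w v)); [|discriminate].
    destruct (Rlt_dec (edist p q) d); [reflexivity|lra].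
  - apply in_prod; assumption.
  - unfold ltb_d; cbn [fst snd]. destruct (Rlt_dec (edist w v) d); [reflexivity|lra].
  - unfold ltb_d; cbn [fst snd]. destruct (Rlt_dec (edist w v) (edist w v)); [lra|reflexivity].
Qed.

Definition concl V k r alpha (u v : point) : Prop :=
  N_alpha alpha V k r u v \/
  exists (m : nat) (s : nat -> point),
    s 0%nat = u /\ s m = v /\
    forall i, (i < m)%nat ->
      N_alpha alpha V k r (s i) (s (S i)) /\ edist (s i) (s (S i)) < edist u v.

Lemma step V Rmax k r alpha (u v : point) :
  radius_levels k r Rmax -> 0 < alpha -> alpha <= 2 * PI / 3 ->
  In u V -> In v V -> u <> v -> edist u v <= Rmax ->
  (forall w, In w V -> w <> v -> edist w v < edist u v -> concl V k r alpha w v) ->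
  concl V k r alpha u v.
Proof.
  intros [Hk1 [Hr1 [Hinc Hrk]]] Ha1 Ha2 Hu Hv Huv Hd IH.
  destruct (classic (exists j, ((1 <= j)%nat /\ (j <= k)%nat) /\ ~ has_gap alpha u (Sset V r j u)))
    as [[j Hj]|Hno].
  - destruct (least_ex (fun j => ((1 <= j)%nat /\ (j <= k)%nat) /\ ~ has_gap alpha u (Sset V r j u)) j Hj) as [j0 [[[H1 H2] Hng] Hleast]].
    assert (Hci : cbtc_index alpha V k r u j0).
    { left. split; [exact H1|]. split; [exact H2|]. split; [exact Hng|].
      intros j' Hj1 Hj2. apply NNPP. intro Hg. apply (Hleast j' Hj2). split; [lia|exact Hg]. }
    destruct (Rle_dec (edist u v) (r j0)) as [Hle|Hgt].
    + left. exists j0. split; [exact Hci|]. split; [exact Hv|]. split; [congruence|exact Hle].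
    + destruct (geo alpha u v (Sset V r j0 u) Ha1 Ha2 Huv Hng) as [w [[Hw [Hwu Hdw]] Hwv]].
      { intros p [_ [Hpu Hdp]]. split; [exact Hpu|lra]. }
      assert (Hwnv : w <> v) by (intro E; subst w; lra).
      assert (HNuw : N_alpha alpha V k r u w) by (exists j0; split; [exact Hci|repeat split; assumption]).
      right.
      destruct (IH w Hw Hwnv Hwv) as [HN|[m [s [Hs0 [Hsm Hs]]]]].
      * exists 2%nat, (fun n => match n with 0%nat => u | 1%nat => w | _ => v end).
        split; [reflexivity|]. split; [reflexivity|].
        intros i Hi. destruct i as [|[|i]]; [split; [exact HNuw|lra]|split; [exact HN|lra]|lia].
      * exists (S m), (fun n => match n with 0%nat => u | S n' => s n' end).
        split; [reflexivity|]. split; [exact Hsm|].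
        intros i Hi. destruct i as [|i].
        -- rewrite Hs0. split; [exact HNuw|lra].
        -- destruct (Hs i ltac:(lia)) as [HN Hlt]. split; [exact HN|lra].
  - left. exists k. split.
    + right. split; [reflexivity|]. intros j Hj1 Hj2. apply NNPP. intro Hg. apply Hno.
      exists j. split; [split; assumption|exact Hg].
    + split; [exact Hv|]. split; [congruence|lra].
Qed.

Lemma main V Rmax k r alpha (v : point) :
  radius_levels k r Rmax -> 0 < alpha -> alpha <= 2 * PI / 3 -> In v V ->
  forall n u, (cnt V (edist u v) < n)%nat -> In u V -> u <> v -> edist u v <= Rmax ->
  concl V k r alpha u v.
Proof.
  intros Hrl Ha1 Ha2 Hv n. induction n as [|n IHn]; intros u Hc Hu Huv Hd; [lia|].
  apply (step V Rmax); try assumption.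
  intros w Hw Hwv Hlt. apply IHn; try assumption.
  - pose proof (cnt_lt V w v (edist u v) Hw Hv Hlt). lia.
  - lra.
Qed.

Theorem lemma2 (V : list point) (Rmax : R) (k : nat) (r : nat -> R) (alpha : R)
  (u v : point) :
  NoDup V -> 0 < Rmax -> radius_levels k r Rmax ->
  0 < alpha -> alpha <= 2 * PI / 3 ->
  In u V -> In v V -> u <> v -> edist u v <= Rmax ->
  N_alpha alpha V k r u v \/
  exists (m : nat) (s : nat -> point),
    s 0%nat = u /\ s m = v /\
    forall i, (i < m)%nat ->
      N_alpha alpha V k r (s i) (s (S i)) /\ edist (s i) (s (S i)) < edist u v.
Proof.
  intros _ _ Hrl Ha1 Ha2 Hu Hv Huv Hd.
  exact (main V Rmax k r alpha v Hrl Ha1 Ha2 Hv (S (cnt V (edist u v))) u (Nat.lt_succ_diag_r _) Hu Huv Hd).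
Qed.
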